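(* Let $\overrightarrow{W}$ be a Morse sequence on a simplicial complex $K$, with reference map $\curlywedge$ and coreference map $\curlyvee$. Let $\kappa$ be a critical simplex of $\overrightarrow{W}$ and $\nu\in K$. Then (1) $\kappa\in\curlywedge(\nu)$ if and only if the number of gradient paths in $\overrightarrow{W}$ from $\nu$ to $\kappa$ is odd; (2) $\kappa\in\curlyvee(\nu)$ if and only if the number of cogradient paths in $\overrightarrow{W}$ from $\kappa$ to $\nu$ is odd.
   Context: A simplicial complex $K$ is a finite collection of non-empty finite sets closed under taking non-empty subsets; members are simplices, $\dim\sigma=|\sigma|-1$, $K^{(p)}$ is the set of $p$-simplices, a facet is a maximal simplex. A pair $(\sigma,\tau)$ with $\sigma\subsetneq\tau$ is a free pair for $K$ if $\tau$ is the only simplex of $K$ other than $\sigma$ containing $\sigma$; then $K$ is an elementary expansion of $K\setminus\{\sigma,\tau\}$. If $\nu$ is a facet of $K$, $K$ is an elementary filling of $K\setminus\{\nu\}$. A Morse sequence on $K$ is a sequence $\langle\emptyset=K_0,\dots,K_k=K\rangle$ with each $K_i$ an elementary expansion or elementary filling of $K_{i-1}$. A simplex added by a filling is critical; if $K_i=K_{i-1}\cup\{\sigma,\tau\}$ is an expansion with $\sigma\subset\tau$, $(\sigma,\tau)$ is a regular pair, $\sigma$ is lower regular and $\tau$ upper regular. Chains mod 2: $K[p]$ is the $\mathbb{Z}_2$-vector space of subsets of $K^{(p)}$ (sum = symmetric difference, empty chain $=0$). For $\sigma\in K^{(p)}$, $\partial(\sigma)=\{\tau\in K^{(p-1)}:\tau\subset\sigma\}$,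 $\delta(\sigma)=\{\tau\in K^{(p+1)}:\sigma\subset\tau\}$. The reference map $\curlywedge$ is the unique map assigning to each $p$-simplex $\nu$ a set $\curlywedge(\nu)$ of critical $p$-simplices, extended linearly to chains ($\curlywedge(c)=\sum_{\nu\in c}\curlywedge(\nu)$ mod 2), such that $\curlywedge(\nu)=\{\nu\}$ for critical $\nu$, and $\curlywedge(\tau)=0$, $\curlywedge(\partial(\tau))=0$ for every upper regular $\tau$. The coreference map $\curlyvee$ is the unique such map with $\curlyvee(\nu)=\{\nu\}$ for critical $\nu$ and $\curlyvee(\sigma)=0$, $\curlyvee(\delta(\sigma))=0$ for every lower regular $\sigma$. A gradient path in $\overrightarrow{W}$ from $\sigma_0$ to $\sigma_k$ is a sequence $\langle\sigma_0,\tau_0,\dots,\sigma_{k-1},\tau_{k-1},\sigma_k\rangle$, $k\ge0$, with $\sigma_i\in K^{(p)}$, $\tau_i\in K^{(p+1)}$, such that for each $i\in[0,k-1]$, $(\sigma_i,\tau_i)$ is a regular pair and $\sigma_{i+1}\in\partial(\tau_i)$ with $\sigma_{i+1}\neq\sigma_i$. A cogradient path from $\tau_0$ to $\tau_k$ is a sequence $\langle\tau_0,\sigma_1,\tau_1,\dots,\sigma_k,\tau_k\rangle$, $k\ge0$, with $\tau_i\in K^{(p)}$, $\sigma_i\in K^{(p-1)}$, such that for each $i\in[1,k]$, $(\sigma_i,\tau_i)$ is a regular pair and $\tau_{i-1}\in\delta(\sigma_i)$ with $\tau_i\neq\tau_{i-1}$. (Paths with $k=0$ are trivial paths $\langle\sigma_0\rangle$.)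 *)

(* Defs.v *)
From mathcomp Require Import all_boot.
Set Implicit Arguments. Unset Strict Implicit. Unset Printing Implicit Defensive.

Section Morse.
Variable V : finType.
Notation simplex := {set V}.
Notation cplx := {set {set V}}.

Definition is_complex (K : cplx) : Prop :=
  forall s, s \in K -> s != set0 /\ (forall t : simplex, t \subset s -> t != set0 -> t \in K).

Definition bd (K : cplx) (t : simplex) : cplx :=
  [set s in K | (s \subset t) && (#|s|.+1 == #|t|)].
Definition cobd (K : cplx) (s : simplex) : cplx :=
  [set t in K | (s \subset t) && (#|t| == #|s|.+1)].

Definition free_pair (K : cplx) (s t : simplex) : Prop :=
  [/\ s \proper t, s \in K, t \in K &
      forall u : simplex, u \in K -> s \subset u -> u = s \/ u = t].

Definition facet (K : cplx) (nu : simplex) : Prop :=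
  nu \in K /\ forall u : simplex, u \in K -> nu \subset u -> u = nu.

Definition expansion_by (K K' : cplx) (s t : simplex) : Prop :=
  free_pair K' s t /\ K = K' :\: [set s; t].
Definition filling_by (K K' : cplx) (nu : simplex) : Prop :=
  facet K' nu /\ K = K' :\ nu.

Definition Ki (Ks : seq cplx) (i : nat) : cplx := nth set0 Ks i.

Definition morse_seq (K : cplx) (Ks : seq cplx) : Prop :=
  [/\ 0 < size Ks, Ki Ks 0 = set0, Ki Ks (size Ks).-1 = K,
      (forall i, i < size Ks -> is_complex (Ki Ks i)) &
      forall i, i.+1 < size Ks ->
        (exists s t, expansion_by (Ki Ks i) (Ki Ks i.+1) s t) \/
        (exists nu, filling_by (Ki Ks i) (Ki Ks i.+1) nu)].

Definition critical (Ks : seq cplx) (nu : simplex) : Prop :=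
  exists i, i.+1 < size Ks /\ filling_by (Ki Ks i) (Ki Ks i.+1) nu.
Definition regular_pair (Ks : seq cplx) (s t : simplex) : Prop :=
  exists i, i.+1 < size Ks /\ expansion_by (Ki Ks i) (Ki Ks i.+1) s t.
Definition upper_regular (Ks : seq cplx) (t : simplex) : Prop :=
  exists s, regular_pair Ks s t.
Definition lower_regular (Ks : seq cplx) (s : simplex) : Prop :=
  exists t, regular_pair Ks s t.

(* Z_2-linear extension of a map f on simplices to chains (subsets c) *)
Definition lin2 (f : simplex -> cplx) (c : cplx) : cplx :=
  [set k | odd #|[set s in c | k \in f s]|].

Definition is_reference_map (K : cplx) (Ks : seq cplx) (ref : simplex -> cplx) : Prop :=
  [/\ (forall nu, nu \in K -> forall k, k \in ref nu ->
          critical Ks k /\ k \in K /\ #|k| = #|nu|),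
      (forall nu, critical Ks nu -> ref nu = [set nu]) &
      (forall t, upper_regular Ks t -> ref t = set0 /\ lin2 ref (bd K t) = set0)].

Definition is_coreference_map (K : cplx) (Ks : seq cplx) (coref : simplex -> cplx) : Prop :=
  [/\ (forall nu, nu \in K -> forall k, k \in coref nu ->
          critical Ks k /\ k \in K /\ #|k| = #|nu|),
      (forall nu, critical Ks nu -> coref nu = [set nu]) &
      (forall s, lower_regular Ks s -> coref s = set0 /\ lin2 coref (cobd K s) = set0)].

(* gradient path <s0, t0, s1, ..., s_k> as a list of simplices *)
Fixpoint is_gpath (K : cplx) (Ks : seq cplx) (l : seq simplex) : Prop :=
  match l with
  | [::] => False
  | [:: s] => s \in K
  | s :: t :: rest =>
      [/\ regular_pair Ks s t, #|t| = #|s|.+1, head set0 rest \in bd K t,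
          head set0 rest != s & is_gpath K Ks rest]
  end.

(* cogradient path <t0, s1, t1, ..., s_k, t_k> as a list of simplices *)
Fixpoint is_cpath (K : cplx) (Ks : seq cplx) (l : seq simplex) : Prop :=
  match l with
  | [::] => False
  | [:: t] => t \in K
  | t :: s :: rest =>
      [/\ t \in cobd K s, regular_pair Ks s (head set0 rest),
          #|head set0 rest| = #|s|.+1, head set0 rest != t & is_cpath K Ks rest]
  end.

Definition path_from_to (P : seq simplex -> Prop) (a b : simplex) (l : seq simplex) : Prop :=
  P l /\ head set0 l = a /\ last set0 l = b.

End Morse.

(* "the number of lists l with P l is odd": the lists satisfying P are
   exactly the entries of a duplicate-free list of odd length. *)
Definition num_odd (T : eqType) (P : seq T -> Prop) : Prop :=
  exists ls : seq (seq T),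
    [/\ uniq ls, (forall l, l \in ls <-> P l) & odd (size ls)].

(* Main.v *)
Require Import Defs.
From mathcomp Require Import all_boot.
Set Implicit Arguments. Unset Strict Implicit. Unset Printing Implicit Defensive.
Definition cntp (T : eqType) (P : seq T -> Prop) (b : bool) : Prop :=
  exists ls : seq (seq T), [/\ uniq ls, (forall l, l \in ls <-> P l) & odd (size ls) = b].

Lemma cntp_ext (T : eqType) (P Q : seq T -> Prop) b :
  (forall l, P l <-> Q l) -> cntp P b -> cntp Q b.
Proof.
move=> PQ [ls [u m s]]; exists ls; split=> // l; exact: iff_trans (m l) (PQ l).
Qed.

Lemma cntp0 (T : eqType) (P : seq T -> Prop) : (forall l, ~ P l) -> cntp P false.
Proof. by move=> nP; exists [::]; split=> // l; split=> // /nP. Qed.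

Lemma cntp1 (T : eqType) (P : seq T -> Prop) a : (forall l, P l <-> l = a) -> cntp P true.
Proof.
move=> Pa; exists [:: a]; split=> // l; rewrite inE; split; [by move/eqP/Pa | by move/Pa => ->].
Qed.

Lemma cntp_or (T : eqType) (P Q : seq T -> Prop) b c :
  cntp P b -> cntp Q c -> (forall l, P l -> Q l -> False) ->
  cntp (fun l => P l \/ Q l) (b (+) c).
Proof.
move=> [l1 [u1 m1 s1]] [l2 [u2 m2 s2]] D; exists (l1 ++ l2); split.
- rewrite cat_uniq u1 u2 /= andbT; apply/hasPn => l /m2 Ql; apply/negP => /m1 Pl.
  exact: (D l).
- move=> l; rewrite mem_cat; split.
  + by case/orP => [/m1|/m2]; auto.
  + by case=> [/m1|/m2] ->; rewrite ?orbT.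
- by rewrite size_cat oddD s1 s2.
Qed.

Lemma cntp_map (T : eqType) (P Q : seq T -> Prop) (f : seq T -> seq T) b :
  injective f -> cntp Q b -> (forall l, P l <-> exists2 l', Q l' & l = f l') -> cntp P b.
Proof.
move=> fi [ls [u m s]] PQ; exists (map f ls); split.
- by rewrite map_inj_uniq.
- move=> l; split.
  + by case/mapP => l' /m Ql' ->; apply/PQ; exists l'.
  + by case/PQ=> l' /m Ql' ->; apply: map_f.
- by rewrite size_map.
Qed.

Lemma cntp_big (X T : eqType) (xs : seq X) (Q : X -> seq T -> Prop) (b : X -> bool) :
  uniq xs -> (forall x, x \in xs -> cntp (Q x) (b x)) ->
  (forall x y l, Q x l -> Q y l -> x = y) ->
  cntp (fun l => exists2 x, x \in xs & Q x l) (odd (count b xs)).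
Proof.
move=> + + D; elim: xs => [|x xs IH] /=.
  by move=> _ _; apply: cntp0 => l [].
case/andP=> nx u H.
have Hor := cntp_or (H x (mem_head _ _)) (IH u (fun y yi => H y (mem_behead (yi : y \in behead (x :: xs))))).
have : cntp (fun l => exists2 y, y \in x :: xs & Q y l) (b x (+) odd (count b xs)).
  apply: (cntp_ext _ (Hor _)).
  - move=> l; split.
    + case=> [Ql|[y yi Ql]]; first by exists x; rewrite ?mem_head.
      by exists y; rewrite // inE yi orbT.
    + case=> y; rewrite inE => /orP [/eqP -> Ql|yi Ql]; first by left.
      by right; exists y.
  - move=> l Ql [y yi Qy]; have exy := D _ _ _ Ql Qy.
    by move: nx; rewrite exy yi.
by rewrite oddD; case: (b x).
Qed.

Lemma cntp_num (T : eqType) (P : seq T -> Prop) b :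
  cntp P b -> (num_odd P <-> b).
Proof.
move=> [ls [u m s]]; split.
- case=> ls' [u' m' s']; rewrite -s.
  have /perm_size -> // : perm_eq ls ls'.
  by apply: uniq_perm => // l; apply/idP/idP => [/m/m'|/m'/m].
- by move=> bt; exists ls; split=> //; rewrite s.
Qed.


Section S.
Variable V : finType.
Variable K : {set {set V}}.
Variable Ks : seq {set {set V}}.
Hypothesis HK : is_complex K.
Hypothesis Hm : morse_seq K Ks.

Lemma exp_D (A B : {set {set V}}) s t : expansion_by A B s t -> B :\: A = [set s; t].
Proof.
case=> [[_ sB tB _] ->]; rewrite setDDr setDv set0U.
by apply/setIidPr; apply/subsetP => x; rewrite !inE => /orP [] /eqP ->.
Qed.

Lemma fill_D (A B : {set {set V}}) nu : filling_by A B nu -> B :\: A = [set nu].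
Proof.
case=> [[nB _] ->]; rewrite setDDr setDv set0U.
by apply/setIidPr; rewrite sub1set.
Qed.

Lemma Ki_step i : i.+1 < size Ks -> Ki Ks i \subset Ki Ks i.+1.
Proof.
case: Hm => _ _ _ _ st /st [[s [t [_ ->]]]|[nu [_ ->]]]; exact: subsetDl.
Qed.

Lemma Ki_mono i j : i <= j -> j < size Ks -> Ki Ks i \subset Ki Ks j.
Proof.
move=> ij; elim: j ij => [|j IH]; first by rewrite leqn0 => /eqP ->.
rewrite leq_eqVlt => /orP [/eqP -> //| ij] js.
apply: subset_trans (IH ij (ltnW js)) (Ki_step js).
Qed.

Lemma Ki_K i : i < size Ks -> Ki Ks i \subset K.
Proof.
move=> iS; case: Hm => s0 _ <- _ _.
by apply: Ki_mono => //; [rewrite -ltnS prednK | rewrite prednK].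
Qed.

Lemma added_uniq i j x : i.+1 < size Ks -> j.+1 < size Ks ->
  x \in Ki Ks i.+1 :\: Ki Ks i -> x \in Ki Ks j.+1 :\: Ki Ks j -> i = j.
Proof.
move=> iS jS; rewrite !inE => /andP [xi xi1] /andP [xj xj1].
case: (ltngtP i j) => // ij.
- by move: xj => /negP; case; apply: (subsetP (Ki_mono ij (ltnW jS))).
- by move: xi => /negP; case; apply: (subsetP (Ki_mono ij (ltnW iS))).
Qed.

Lemma rp_step s t : regular_pair Ks s t -> exists i, i.+1 < size Ks /\
  Ki Ks i.+1 :\: Ki Ks i = [set s; t] /\ expansion_by (Ki Ks i) (Ki Ks i.+1) s t.
Proof. by case=> i [iS e]; exists i; split=> //; split=> //; apply: exp_D. Qed.

Lemma cr_step nu : critical Ks nu -> exists i, i.+1 < size Ks /\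
  Ki Ks i.+1 :\: Ki Ks i = [set nu].
Proof. by case=> i [iS e]; exists i; split=> //; apply: fill_D e. Qed.

Lemma rp_neq s t : regular_pair Ks s t -> s != t.
Proof. by case=> i [_ [[/proper_neq]]]. Qed.

Lemma rp_proper s t : regular_pair Ks s t -> s \proper t.
Proof. by case=> i [_ [[]]]. Qed.

Lemma crit_not_lower x t : critical Ks x -> regular_pair Ks x t -> False.
Proof.
move=> /cr_step [i [iS Di]] /[dup] /rp_neq xt /rp_step [j [jS [Dj _]]].
have ij : i = j by apply: (added_uniq (x:=x) iS jS); rewrite ?Di ?Dj ?set11 ?set21 ?set22.
move: Dj; rewrite -ij Di => /setP /(_ t); rewrite !inE eqxx orbT => /eqP tx.
by move: xt; rewrite tx eqxx.
Qed.

Lemma crit_not_upper x s : critical Ks x -> regular_pair Ks s x -> False.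
Proof.
move=> /cr_step [i [iS Di]] /[dup] /rp_neq xt /rp_step [j [jS [Dj _]]].
have ij : i = j by apply: (added_uniq (x:=x) iS jS); rewrite ?Di ?Dj ?set11 ?set21 ?set22.
move: Dj; rewrite -ij Di => /setP /(_ s); rewrite !inE eqxx /= => /eqP sx.
by move: xt; rewrite sx eqxx.
Qed.

Lemma upper_not_lower s x t : regular_pair Ks s x -> regular_pair Ks x t -> False.
Proof.
move=> /[dup] /rp_proper sx /rp_step [i [iS [Di _]]] /[dup] /rp_proper xt /rp_step [j [jS [Dj _]]].
have ij : i = j by apply: (added_uniq (x:=x) iS jS); rewrite ?Di ?Dj ?set11 ?set21 ?set22.
move: Dj; rewrite -ij Di => /setP /(_ s); rewrite !inE eqxx /= => /esym /orP [] /eqP e.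
- by move: sx; rewrite e properxx.
- by move: (proper_trans sx xt); rewrite e properxx.
Qed.

Lemma pair_uniq_r s t t' : regular_pair Ks s t -> regular_pair Ks s t' -> t = t'.
Proof.
move=> /[dup] /rp_neq st /rp_step [i [iS [Di _]]] /[dup] /rp_neq st' /rp_step [j [jS [Dj _]]].
have ij : i = j by apply: (added_uniq (x:=s) iS jS); rewrite ?Di ?Dj ?set11 ?set21 ?set22.
move: Dj; rewrite -ij Di => /setP /(_ t); rewrite !inE eqxx orbT => /esym /orP [] /eqP //.
by move=> e; move: st; rewrite e eqxx.
Qed.

Lemma pair_uniq_l s s' t : regular_pair Ks s t -> regular_pair Ks s' t -> s = s'.
Proof.
move=> /[dup] /rp_neq st /rp_step [i [iS [Di _]]] /[dup] /rp_neq st' /rp_step [j [jS [Dj _]]].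
have ij : i = j by apply: (added_uniq (x:=t) iS jS); rewrite ?Di ?Dj ?set11 ?set21 ?set22.
move: Dj; rewrite -ij Di => /setP /(_ s); rewrite !inE eqxx /= => /esym /orP [] /eqP //.
by move=> e; move: st; rewrite e eqxx.
Qed.

Lemma rp_inK s t : regular_pair Ks s t -> s \in K /\ t \in K.
Proof.
case=> i [iS [[_ sK tK _] _]].
by split; apply: (subsetP (Ki_K iS)).
Qed.

Lemma cr_inK x : critical Ks x -> x \in K.
Proof. by case=> i [iS [[xK _] _]]; apply: (subsetP (Ki_K iS)). Qed.

Lemma rp_card s t : regular_pair Ks s t -> #|t| = #|s|.+1.
Proof.
case=> i [iS [[pst sK tK fr] _]].
have [x xt xs] : exists2 x, x \in t & x \notin s.
  by case/properP: pst => _ [x ? ?]; exists x.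
have cx : is_complex (Ki Ks i.+1) by case: Hm => _ _ _ C _; apply: C.
have uK : x |: s \in Ki Ks i.+1.
  case: (cx t tK) => _; apply.
  - by rewrite subUset sub1set xt (proper_sub pst).
  - by apply/set0Pn; exists x; rewrite !inE eqxx.
case: (fr _ uK (subsetUr _ _)) => e.
- by move: xs; rewrite -e !inE eqxx.
- by rewrite -e cardsU1 xs.
Qed.


Lemma count_card (T : finType) (b : pred T) (A : {set T}) :
  count b (enum A) = #|[set x in A | b x]|.
Proof.
rewrite -size_filter.
have u : uniq (filter b (enum A)) by apply: filter_uniq; apply: enum_uniq.
rewrite -(card_uniqP u); apply: eq_card => x; rewrite mem_filter mem_enum !inE andbC.
by [].
Qed.

Lemma lin2_par (f : {set V} -> {set {set V}}) (A : {set {set V}}) x k :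
  lin2 f A = set0 -> x \in A ->
  odd (count (fun s => k \in f s) (enum (A :\ x))) = (k \in f x).
Proof.
move=> /setP /(_ k); rewrite /lin2 !inE => H xA.
have E : [set y in A | k \in f y] :\ x = [set y in A :\ x | k \in f y].
  by apply/setP => y; rewrite !inE andbA.
rewrite (cardsD1 x) E in H; rewrite count_card.
move: H; rewrite !inE xA /= oddD.
rewrite oddb; case: (k \in f x) => /= H; last by []. by move: H => /negbT/negbNE.
Qed.

Lemma rp_set0 t : regular_pair Ks t set0 -> False.
Proof. by move/rp_proper/proper_card; rewrite cards0. Qed.

Lemma head_rcons_cat (p w : seq {set V}) x :
  head set0 (rcons p x ++ w) = head set0 (rcons p x).
Proof. by case: p. Qed.

Lemma cpath_rcons pre x s t :
  is_cpath K Ks (rcons pre x ++ [:: s; t]) <->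
  is_cpath K Ks (rcons pre x) /\
  [/\ x \in cobd K s, regular_pair Ks s t, #|t| = #|s|.+1, t != x & t \in K].
Proof.
have [n] := ubnP (size pre); elim: n pre => // n IH [|a [|b p]] /= Hn.
- split; first by case=> H1 H2 H3 H4 H5; split=> //; move: H1; rewrite inE => /andP [].
  by case=> _ [H1 H2 H3 H4 H5]; split.
- split; first by case=> _ _ _ _ [_ /rp_set0].
  by case=> [[_ /rp_set0]].
- have Hp : size p < n by move: Hn => /=; rewrite !ltnS => /ltnW.
  have IHp := IH p Hp.
  rewrite head_rcons_cat; split.
  + by case=> H1 H2 H3 H4 /IHp [H5 H6]; split.
  + by case=> [[H1 H2 H3 H4 H5] H6]; split=> //; apply/IHp.
Qed.


Variable kappa : {set V}.
Hypothesis Hk : critical Ks kappa.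

Notation G s := (path_from_to (is_gpath K Ks) s kappa).
Notation C s := (path_from_to (is_cpath K Ks) kappa s).

Lemma G_base s : s \in K -> (forall t, ~ regular_pair Ks s t) -> cntp (G s) (s == kappa).
Proof.
move=> sK nr; case: eqP => e.
- apply: (cntp1 (a := [:: s])) => l; split.
  + case=> H [hd lt]; case: l H hd lt => [|y [|t r]] //=.
    * by move=> _ ->.
    * by move=> [H1 _ _ _ _] hd; move: H1; rewrite hd => /nr.
  + by move=> -> /=; split.
- apply: cntp0 => l [H [hd lt]]; case: l H hd lt => [|y [|t r]] //=.
  * by move=> _ -> /e.
  * by move=> [H1 _ _ _ _] hd; move: H1; rewrite hd => /nr.
Qed.

Lemma G_step s t : regular_pair Ks s t -> s != kappa -> forall l,
  G s l <-> exists2 s', s' \in enum (bd K t :\ s) & exists2 r, G s' r & l = s :: t :: r.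
Proof.
move=> st sk l; split.
- case=> H [hd lt]; case: l H hd lt => [|y [|t' r]] //=.
  + by move=> _ e1 e2; move: sk; rewrite -e1 e2 eqxx.
  + case=> H1 H2 H3 H4 H5 e1 lt; subst y.
    have e := pair_uniq_r st H1; subst t'.
    exists (head set0 r); first by rewrite mem_enum !inE H4 /=; move: H3; rewrite inE.
    exists r => //; split=> //; split=> //.
    by case: r H3 H4 H5 lt.
- case=> s' /[!mem_enum] /[!inE] /andP [s's s'b] [r [H [hd lt]] ->].
  split=> /=; last first.
    by split=> //; case: r H hd lt.
  split=> //.
  + exact: rp_card st.
  + by rewrite hd inE.
  + by rewrite hd.
Qed.


Lemma grad_main (ref : {set V} -> {set {set V}}) : is_reference_map K Ks ref ->
  forall i, i < size Ks -> forall s, s \in Ki Ks i -> cntp (G s) (kappa \in ref s).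
Proof.
move=> [_ Hcr Hup].
elim=> [|i IH] iS s.
  by case: Hm => _ -> _ _ _; rewrite inE.
have iS' : i < size Ks by apply: ltnW.
case: (boolP (s \in Ki Ks i)) => [si _|sni si1]; first exact: IH.
have Cx : is_complex (Ki Ks i.+1) by case: Hm => _ _ _ CC _; apply: CC.
have sD : s \in Ki Ks i.+1 :\: Ki Ks i by rewrite inE sni si1.
case: Hm => _ _ _ _ St; case: (St i iS) => [[s0 [t0 E]] | [nu F]].
- have rp : regular_pair Ks s0 t0 by exists i.
  rewrite (exp_D E) in sD.
  case/set2P: sD => ->.
  + have sk : s0 != kappa by apply/eqP => e; subst s0; apply: (crit_not_lower Hk rp).
    have [sK tK] := rp_inK rp.
    have lin : lin2 ref (bd K t0) = set0 by case: (Hup t0) => //; exists s0.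
    have sb : s0 \in bd K t0.
      by rewrite inE sK (proper_sub (rp_proper rp)) (rp_card rp) eqxx.
    apply: (cntp_ext (fun l => iff_sym (G_step rp sk l))).
    rewrite -(@lin2_par ref (bd K t0) s0 kappa lin sb).
    apply: cntp_big; first exact: enum_uniq.
    * move=> x; rewrite mem_enum !inE => /andP [xs /andP [xK /andP [xt xc]]].
      apply: (cntp_map (Q := fun r => G x r) (f := fun r => s0 :: t0 :: r)).
      - by move=> a b [].
      - apply: IH => //.
        case: E => [[_ _ t0K _] ->].
        rewrite in_setD in_set2 negb_or xs /=; apply/andP; split.
        + apply/negP => /eqP e; subst x; move: xc; by rewrite eqn_leq ltnn.
        + by case: (Cx t0 t0K) => _; apply => //; case: (HK xK).
      - by move=> l; split.
    * move=> x y l [r1 [_ [h1 _]] ->] [r2 [_ [h2 _]] [e]].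
      by rewrite -h1 -h2 e.
  + have -> : ref t0 = set0 by case: (Hup t0) => //; exists s0.
    rewrite inE.
    have e0 : (t0 == kappa) = false.
      by apply/eqP => e; subst t0; apply: (crit_not_upper Hk rp).
    rewrite -e0.
    apply: G_base; first by case: (rp_inK rp).
    by move=> t rt; apply: (upper_not_lower rp rt).
- rewrite (fill_D F) inE in sD; move/eqP: sD => ->.
  have cr : critical Ks nu by exists i.
  rewrite Hcr // inE eq_sym.
  apply: G_base; first exact: cr_inK.
  by move=> t rt; apply: (crit_not_lower cr rt).
Qed.


Lemma cpath_last l : is_cpath K Ks l ->
  (exists t, l = [:: t]) \/ upper_regular Ks (last set0 l).
Proof.
have [n] := ubnP (size l); elim: n l => // n IH [|t [|s r]] //= Hn.
- by move=> _; left; exists t.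
- case=> H1 H2 H3 H4 H5.
  case: r Hn H2 H3 H4 H5 => [|y [|z r']] //= Hn H2 H3 H4 H5.
  + by right; exists s.
  + have : size [:: y, z & r'] < n by move: Hn => /=; rewrite !ltnS => /ltnW.
    by move/IH => /(_ H5) [[t' //] | /= U]; right.
Qed.

Lemma C_base nu : nu \in K -> ~ upper_regular Ks nu -> cntp (C nu) (kappa == nu).
Proof.
move=> nK nr; case: eqP => e.
- apply: (cntp1 (a := [:: nu])) => l; split.
  + case=> H [hd lt]; case: (cpath_last H) => [[t el]|].
    * by move: hd lt; rewrite el /= => _ ->.
    * by rewrite lt.
  + by move=> -> /=; split.
- apply: cntp0 => l [H [hd lt]]; case: (cpath_last H) => [[t el]|].
  * by move: hd lt; rewrite el /= => -> /e.
  * by rewrite lt.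
Qed.

Lemma C_step s nu : regular_pair Ks s nu -> nu != kappa -> forall l,
  C nu l <-> exists2 t', t' \in enum (cobd K s :\ nu) &
                exists2 p, C t' p & l = p ++ [:: s; nu].
Proof.
move=> rp nk l; split.
- case=> H [hd lt].
  case/lastP: l H hd lt => [|l1 y] //.
  case/lastP: l1 => [|l2 s'].
    by move=> _ /= e1 e2; move: nk; rewrite -e2 -e1 eqxx.
  case/lastP: l2 => [|l3 x].
    by move=> /= [_ /rp_set0].
  have -> : rcons (rcons (rcons l3 x) s') y = rcons l3 x ++ [:: s'; y].
    by rewrite -!cats1 -!catA.
  rewrite last_cat /= head_rcons_cat => /cpath_rcons [Hp [c1 c2 c3 c4 c5]] hd ey.
  subst y.
  have es := pair_uniq_l c2 rp; subst s'.
  exists x; first by rewrite mem_enum !inE eq_sym c4 /=; move: c1; rewrite inE.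
  exists (rcons l3 x) => //; split=> //; split=> //.
  by rewrite last_rcons.
- case=> t' /[!mem_enum] /[!inE] /andP [tn tc] [p [Hp [hd lt]] ->].
  case/lastP: p Hp hd lt => [|l3 x] // Hp hd lt.
  rewrite last_rcons in lt; subst x.
  split; last by rewrite head_rcons_cat last_cat.
  apply/cpath_rcons; split=> //; split=> //.
  + by rewrite inE.
  + exact: rp_card rp.
  + by rewrite eq_sym.
  + by case: (rp_inK rp).
Qed.


Lemma cat2_inj (s t : {set V}) : injective (fun p : seq {set V} => p ++ [:: s; t]).
Proof.
move=> a b e; apply: (@rcons_injl _ s); apply: (@rcons_injl _ t).
by rewrite -!cats1 -!catA.
Qed.

Lemma cog_main (coref : {set V} -> {set {set V}}) : is_coreference_map K Ks coref ->
  forall n nu, nu \in K -> nu \notin Ki Ks ((size Ks).-1 - n) ->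
  cntp (C nu) (kappa \in coref nu).
Proof.
move=> [_ Hcr Hlo].
have [S0 K0 KN Cx St] := Hm.
elim=> [|n IH] nu nK.
  by rewrite subn0 KN nK.
case: (leqP (size Ks).-1 n) => hn.
  have e1 : (size Ks).-1 - n.+1 = 0 by apply/eqP; rewrite subn_eq0 leqW.
  have e2 : (size Ks).-1 - n = 0 by apply/eqP; rewrite subn_eq0.
  by rewrite e1 -e2; apply: IH.
set j := (size Ks).-1 - n.+1.
have ej : j.+1 = (size Ks).-1 - n by rewrite /j subnSK.
have jS : j.+1 < size Ks.
  by rewrite ej; apply: (leq_ltn_trans (leq_subr _ _)); rewrite prednK.
move=> nj.
case: (boolP (nu \in Ki Ks j.+1)) => [nj1 | nj1]; last by apply: IH => //; rewrite -ej.
have nD : nu \in Ki Ks j.+1 :\: Ki Ks j by rewrite inE nj nj1.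
case: (St j jS) => [[s [t E]] | [nu' F]].
- have rp : regular_pair Ks s t by exists j.
  rewrite (exp_D E) in nD.
  case/set2P: nD => ->.
  + have -> : coref s = set0 by case: (Hlo s) => //; exists t.
    rewrite inE.
    have e0 : (kappa == s) = false.
      by apply/eqP => e; subst s; apply: (crit_not_lower Hk rp).
    rewrite -e0; apply: C_base; first by case: (rp_inK rp).
    by case=> s' rp'; apply: (upper_not_lower rp' rp).
  + have tk : t != kappa by apply/eqP => e; subst t; apply: (crit_not_upper Hk rp).
    have [sK tK] := rp_inK rp.
    have lin : lin2 coref (cobd K s) = set0 by case: (Hlo s) => //; exists t.
    have tb : t \in cobd K s.
      by rewrite inE tK (proper_sub (rp_proper rp)) (rp_card rp) eqxx.
    apply: (cntp_ext (fun l => iff_sym (C_step rp tk l))).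
    rewrite -(@lin2_par coref (cobd K s) t kappa lin tb).
    apply: cntp_big; first exact: enum_uniq.
    * move=> x; rewrite mem_enum !inE => /andP [xt /andP [xK /andP [sx xc]]].
      apply: (cntp_map (Q := fun p => C x p) (f := fun p => p ++ [:: s; t])).
      - exact: cat2_inj.
      - apply: IH => //; rewrite -ej; apply/negP => xj1.
        have [[_ _ _ _] Ej] := E.
        have xj : x \in Ki Ks j.
          rewrite Ej in_setD in_set2 negb_or xt xj1 andbT /=.
          rewrite andbT; apply/negP => /eqP e; subst x; move: xc; by rewrite eqn_leq ltnn andbF.
        have sj : s \in Ki Ks j.
          case: (Cx j (ltnW jS) x xj) => _; apply => //.
          by case: (HK sK).
        by move: sj; rewrite Ej in_setD set21.
      - by move=> l; split.
    * move=> x y l [p1 [_ [_ l1]] ->] [p2 [_ [_ l2]] e].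
      by rewrite -l1 -l2 (cat2_inj e).
- rewrite (fill_D F) inE in nD; move/eqP: nD => ->.
  have cr : critical Ks nu' by exists j.
  rewrite Hcr // inE.
  apply: C_base; first exact: cr_inK.
  by case=> s' rp'; apply: (crit_not_upper cr rp').
Qed.

End S.

Theorem theorem2 (V : finType) (K : {set {set V}}) (Ks : seq {set {set V}})
    (ref coref : {set V} -> {set {set V}}) (kappa nu : {set V}) :
  is_complex K -> morse_seq K Ks ->
  is_reference_map K Ks ref -> is_coreference_map K Ks coref ->
  critical Ks kappa -> nu \in K ->
  (kappa \in ref nu <->
     num_odd (path_from_to (is_gpath K Ks) nu kappa)) /\
  (kappa \in coref nu <->
     num_odd (path_from_to (is_cpath K Ks) kappa nu)).
Proof.
move=> HK Hm Hr Hc Hk nK.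
have [S0 K0 KN _ _] := Hm.
split.
- have iS : (size Ks).-1 < size Ks by rewrite prednK.
  have nN : nu \in Ki Ks (size Ks).-1 by rewrite KN.
  have := grad_main HK Hm Hk Hr iS nN.
  by move/cntp_num => H; split => /H.
- have nN : nu \notin Ki Ks ((size Ks).-1 - (size Ks).-1) by rewrite subnn K0 inE.
  have := cog_main HK Hm Hk Hc nK nN.
  by move/cntp_num => H; split => /H.
Qed.
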